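(* Let $n\ge 2$ and $q\ge 2$ be integers and put $S_1=\sqrt{q^2+4(q-1)(n-2)}$. Let $d$ be an integer and define $j$ by $d=n-1-\frac{n-2+j}{q}$ (so $j=q(n-1-d)-n+2$), and assume $j\in\left[0,\frac{S_1-q}{2}\right)$. Put $s=1-\frac{2d}{n}$, $d_0=n-\frac{j(n-1)}{q(j+q-1)}$, and let $e$ be the unique rational number in $(0,1]$ such that $d_0+e$ is an integer. Define $$f(t)=\Big(t+1+\tfrac{2e}{n}-\tfrac{2j(n-1)}{nq(j+q-1)}\Big)\Big(t+1+\tfrac{2(e-1)}{n}-\tfrac{2j(n-1)}{nq(j+q-1)}\Big)(t-s),$$ and write its Krawtchouk expansion as $f(t)=f_0+f_1Q_1^{(n,q)}(t)+f_2Q_2^{(n,q)}(t)+f_3Q_3^{(n,q)}(t)$. Then $f_2>0$.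
   Context: For integers $n,q$ and $0\le i\le n$, the Krawtchouk polynomial is $K_i^{(n,q)}(z)=\sum_{l=0}^{i}(-1)^l(q-1)^{i-l}\binom{z}{l}\binom{n-z}{i-l}$ (a polynomial in $z$ of degree $i$), and the normalized Krawtchouk polynomial is $Q_i^{(n,q)}(t)=\frac{1}{r_i}K_i^{(n,q)}\!\big(\tfrac{n(1-t)}{2}\big)$ with $r_i=(q-1)^i\binom{n}{i}$; every real polynomial of degree $m\le n$ in $t$ has a unique expansion $\sum_{i=0}^m f_iQ_i^{(n,q)}(t)$. *)

(* Defs.v *)
From HB Require Import structures.
From mathcomp Require Import all_boot all_order all_algebra.
From mathcomp Require Import reals.
Set Implicit Arguments. Unset Strict Implicit. Unset Printing Implicit Defensive.
Import Order.TTheory GRing.Theory Num.Theory.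
Local Open Scope ring_scope.

Definition binomp (R : realType) (l : nat) : {poly R} :=
  (l`!%:R)^-1 *: \prod_(k < l) ('X - (k%:R)%:P).

Definition kraw (R : realType) (n q i : nat) : {poly R} :=
  \sum_(l < i.+1)
     (((-1) ^+ l * (q%:R - 1) ^+ (i - l)) *:
        (binomp R l * (binomp R (i - l) \Po ((n%:R)%:P - 'X)))).

Definition kr (R : realType) (n q i : nat) : R := (q%:R - 1) ^+ i * 'C(n, i)%:R.

Definition krawQ (R : realType) (n q i : nat) : {poly R} :=
  (kr R n q i)^-1 *: (kraw R n q i \Po ((n%:R / 2) *: (1 - 'X))).

(* Main.v *)
Require Import Defs.
From HB Require Import structures.
From mathcomp Require Import all_boot all_order all_algebra.
From mathcomp Require Import reals ring lra.
Import Order.TTheory GRing.Theory Num.Theory.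
Local Open Scope ring_scope.

Lemma binomp_h (R : realType) l (z : R) :
  (binomp R l).[z] = (l`!%:R)^-1 * \prod_(k < l) (z - k%:R).
Proof. by rewrite /binomp hornerZ horner_prod; under eq_bigr do rewrite !hornerE. Qed.

Lemma kraw_h (R : realType) n q i (z : R) :
  (kraw R n q i).[z] = \sum_(l < i.+1) ((-1) ^+ l * (q%:R - 1) ^+ (i - l)) *
     ((binomp R l).[z] * (binomp R (i - l)).[n%:R - z]).
Proof.
rewrite /kraw horner_sum; apply: eq_bigr => l _.
by rewrite hornerZ hornerM horner_comp !hornerE.
Qed.

Definition K1e {R : realType} (N Q z : R) := (Q-1)*(N-z) - z.
Definition K2e {R : realType} (N Q z : R) :=
  (Q-1)^+2*((N-z)*(N-z-1)/2) - (Q-1)*z*(N-z) + z*(z-1)/2.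
Definition K3e {R : realType} (N Q z : R) :=
  (Q-1)^+3 * ((N-z)*(N-z-1)*(N-z-2)/6) - (Q-1)^+2 * z * ((N-z)*(N-z-1)/2)
  + (Q-1) * (z*(z-1)/2) * (N-z) - z*(z-1)*(z-2)/6.

Lemma K0 (R : realType) n q (z : R) : (kraw R n q 0).[z] = 1.
Proof.
rewrite kraw_h big_ord_recr big_ord0 /= !binomp_h !big_ord0.
by rewrite !expr0 !subnn !fact0 /=; field.
Qed.

Lemma K1 (R : realType) n q (z : R) : (kraw R n q 1).[z] = K1e n%:R q%:R z.
Proof.
rewrite /K1e kraw_h !big_ord_recr big_ord0 /= !binomp_h.
rewrite !big_ord_recr !big_ord0 /=.
rewrite !expr0 !expr1 !subn0 !subnn !factS !fact0.
by field.
Qed.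

Lemma K2 (R : realType) n q (z : R) : (kraw R n q 2).[z] = K2e n%:R q%:R z.
Proof.
rewrite /K2e kraw_h !big_ord_recr big_ord0 /= !binomp_h.
rewrite !big_ord_recr !big_ord0 /=.
rewrite !expr0 !expr1 !subn0 !subnn.
rewrite (_ : (2-1 = 1)%N) //.
rewrite !factS !fact0.
by field.
Qed.

Lemma K3 (R : realType) n q (z : R) : (kraw R n q 3).[z] = K3e n%:R q%:R z.
Proof.
rewrite /K3e kraw_h !big_ord_recr big_ord0 /= !binomp_h.
rewrite !big_ord_recr !big_ord0 /=.
rewrite !expr0 !expr1 !mul1r.
rewrite !subn0 !subnn.
rewrite (_ : (3-1 = 2)%N) // (_:(3-2 = 1)%N) //.
rewrite !factS !fact0.
by field.
Qed.

Lemma krawQ_h (R : realType) n q i (x : R) :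
  (krawQ R n q i).[x] = (kr R n q i)^-1 * (kraw R n q i).[n%:R / 2 * (1 - x)].
Proof. by rewrite /krawQ hornerZ horner_comp !hornerE. Qed.

Lemma keyP (R : realType) (J Q N S : R) : 0 <= J -> 2 <= Q -> 2 <= N ->
  S ^+ 2 = Q ^+ 2 + 4 * (Q - 1) * (N - 2) -> 0 <= S -> J < (S - Q) / 2 ->
  0 < - J ^+ 2 - J + (Q + 2 * N - 4) * (Q - 1).
Proof.
move=> J0 Q2 N2 hS S0 hJ.
have h1 : 2 * J + Q < S by lra.
have h2 : (2 * J + Q) ^+ 2 < S ^+ 2 by nra.
rewrite hS in h2. nra.
Qed.

Arguments keyP {R J Q N S}.

Lemma finP (R : realType) (f2 k2 e P Y N C : R) : 0 < k2 -> 0 < e -> 0 < P -> 0 < Y ->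
  0 < N -> 0 < C -> f2 * k2 = 2 * (2 * e + P / Y) / N * C -> 0 < f2.
Proof.
move=> k0 e0 P0 Y0 N0 C0 h.
have : 0 < f2 * k2.
  rewrite h; apply: mulr_gt0 => //; apply: mulr_gt0; rewrite ?invr_gt0 //; apply: mulr_gt0 => //; apply: addr_gt0; [apply: mulr_gt0 | apply: divr_gt0] => //.
by rewrite pmulr_lgt0.
Qed.

Arguments finP {R f2 k2 e P Y N C}.

Theorem lemma1 (R : realType) (n q : nat) (d : int) (e : R)
  (hn : (2 <= n)%N) (hq : (2 <= q)%N) :
  let S1 : R := Num.sqrt ((q%:R) ^+ 2 + 4 * (q%:R - 1) * (n%:R - 2)) in
  let j : int := (q%:Z * (n%:Z - 1 - d) - n%:Z + 2)%R in
  let jR : R := j%:~R in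
  let s : R := 1 - 2 * d%:~R / n%:R in
  let d0 : R := n%:R - jR * (n%:R - 1) / (q%:R * (jR + q%:R - 1)) in
  let a : R := 2 * jR * (n%:R - 1) / (n%:R * q%:R * (jR + q%:R - 1)) in
  let f : {poly R} :=
    ('X + (1 + 2 * e / n%:R - a)%:P) *
    ('X + (1 + 2 * (e - 1) / n%:R - a)%:P) * ('X - s%:P) in
  (0 <= j)%R -> jR < (S1 - q%:R) / 2 ->
  0 < e -> e <= 1 -> d0 + e \is a Num.int ->
  forall f0 f1 f2 f3 : R,
    f = f0 *: krawQ R n q 0 + f1 *: krawQ R n q 1
        + f2 *: krawQ R n q 2 + f3 *: krawQ R n q 3 ->
    0 < f2.
Proof.
move=> S1 j jR s d0 a f hj0 hjS he0 he1 _ f0 f1 f2 f3 hf.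
have k2gt0 : 0 < (kr R n q 2)^-1.
  rewrite invr_gt0 /kr mulr_gt0 // ?exprn_gt0 ?ltr0n ?bin_gt0 //.
  by rewrite subr_gt0 ltr1n.
have hx : forall x : R, f.[x] = (f0 *: krawQ R n q 0 + f1 *: krawQ R n q 1
        + f2 *: krawQ R n q 2 + f3 *: krawQ R n q 3).[x] by move=> x; rewrite -hf.
have Hg : forall x : R, (x + (1 + 2 * e / n%:R - a)) * (x + (1 + 2 * (e - 1) / n%:R - a)) * (x - s)
   - (f0 * (kr R n q 0)^-1 + f1 * ((kr R n q 1)^-1 * K1e n%:R q%:R (n%:R / 2 * (1 - x)))
      + f2 * ((kr R n q 2)^-1 * K2e n%:R q%:R (n%:R / 2 * (1 - x)))
      + f3 * ((kr R n q 3)^-1 * K3e n%:R q%:R (n%:R / 2 * (1 - x)))) = 0.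
  move=> x; apply/eqP; rewrite subr_eq0; apply/eqP.
  transitivity f.[x]; first by rewrite /f !hornerE.
  by rewrite hx !hornerD !(hornerZ _ (krawQ _ _ _ _)) !krawQ_h K0 K1 K2 K3; ring.
move: k2gt0 Hg.
set A := 1 + 2 * e / n%:R - a.
set B := 1 + 2 * (e - 1) / n%:R - a.
set k0 := (kr R n q 0)^-1.
set k1 := (kr R n q 1)^-1.
set k2 := (kr R n q 2)^-1.
set k3 := (kr R n q 3)^-1.
set N : R := n%:R.
set Q : R := q%:R.
move=> k2gt0 Hg.
pose g (x : R) := (x + A) * (x + B) * (x - s) -
  (f0 * k0 + f1 * (k1 * K1e N Q (N / 2 * (1 - x))) +
   f2 * (k2 * K2e N Q (N / 2 * (1 - x))) +
   f3 * (k3 * K3e N Q (N / 2 * (1 - x)))).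
have E3 : 1 - f3 * k3 * (Q^+3 * N^+3 / 48) = (g 2 - 3 * g 1 + 3 * g 0 - g (-1)) / 6.
  by rewrite /g /K1e /K2e /K3e; field.
have E2 : A + B - s - f2 * k2 * (Q^+2 * N^+2 / 8)
   - f3 * k3 * (- Q^+3 * N^+3 / 16 + Q^+2 * N^+2 * (N * (Q - 1) + 2 - Q) / 8)
   = (g 1 + g (-1)) / 2 - g 0.
  by rewrite /g /K1e /K2e /K3e; field.
have Hg' : forall x, g x = 0 := Hg.
rewrite !Hg' in E3 E2.
rewrite (_ : (0 - 3 * 0 + 3 * 0 - 0) / 6 = 0 :> R) in E3; last by ring.
rewrite (_ : (0 + 0) / 2 - 0 = 0 :> R) in E2; last by ring.
have Q2 : 2 <= Q by rewrite /Q ler_nat.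
have N2 : 2 <= N by rewrite /N ler_nat.
have Qn0 : Q != 0 by rewrite /Q pnatr_eq0 -lt0n; exact: ltn_trans (ltnSn 0) hq.
have Nn0 : N != 0 by rewrite /N pnatr_eq0 -lt0n; exact: ltn_trans (ltnSn 0) hn.
have J0 : 0 <= jR by rewrite /jR ler0z.
have Jn0 : jR + Q - 1 != 0.
  apply/eqP => h.
  have L : forall x y : R, 0 <= x -> x + y - 1 = 0 -> 2 <= y -> False by move=> x y; lra.
  exact: L _ _ J0 h Q2.
set u := f3 * k3 in E3 E2.
have hu : u = 48 / (Q^+3 * N^+3) - (1 - u * (Q^+3 * N^+3 / 48)) * (48 / (Q^+3 * N^+3)).
  by field; apply/andP.
rewrite E3 mul0r subr0 in hu.
set w := f2 * k2 in E2.
set M := - Q^+3 * N^+3 / 16 + Q^+2 * N^+2 * (N * (Q - 1) + 2 - Q) / 8.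
have hw : w = (A + B - s - u * M) * (8 / (Q^+2 * N^+2)) - (A + B - s - w * (Q^+2 * N^+2 / 8) - u * M) * (8 / (Q^+2 * N^+2)).
  by field; apply/andP.
rewrite E2 mul0r subr0 hu in hw.
set D : R := d%:~R.
have hJ : jR = Q * (N - 1 - D) - N + 2.
  by rewrite /jR /j /D /Q /N; ring.
set P := - jR ^+ 2 - jR + (Q + 2 * N - 4) * (Q - 1).
have hD : D = N - 1 - (N - 2 + jR) / Q by rewrite hJ; field.
have hT : A + B - s - 48 / (Q^+3 * N^+3) * M = 2 * (2 * e + P / (Q * (jR + Q - 1))) / N.
  rewrite /A /B /s /a /M /P -/D hD. by field; apply/and3P.
rewrite hT in hw.
have L1 : forall x y : R, 0 <= x -> 2 <= y -> 0 < y * (x + y - 1) /\ 0 < y.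
  by move=> x y h1 h2; split; [apply: mulr_gt0|]; lra.
have [Y0 Q0] := L1 _ _ J0 Q2.
have L2 : forall x : R, 2 <= x -> 0 < x by move=> x h; lra.
have N0 := L2 _ N2.
have C0 : 0 < 8 / (Q ^+ 2 * N ^+ 2).
  by rewrite divr_gt0 // mulr_gt0 // exprn_gt0.
have L3 : forall x y : R, 2 <= x -> 2 <= y -> 0 <= x ^+ 2 + 4 * (x - 1) * (y - 2).
  by move=> x y h1 h2; nra.
have P0 : 0 < P.
  apply: (keyP J0 Q2 N2 _ _ hjS).
    by rewrite /S1 sqr_sqrtr // L3.
  by rewrite /S1 sqrtr_ge0.
exact: (finP k2gt0 he0 P0 Y0 N0 C0 hw).
Qed.
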